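(* In the structural equation model of the context, let $S_1,\dots,S_m\subsetneq\{1,\dots,q\}$, let $\beta$ be deterministic with $\|\beta\|=\rho_\beta$, and let $\gamma$ be a spherically symmetric random vector in $\mathbb{R}^q$ with $\mathbb{E}\|\gamma\|^4=O(\rho_\gamma^4/q^2)$. Let $\mathbf{C}_m=\frac1m\sum_{j=1}^m\mathbf{C}(S_j)$ and $\widetilde{\mathbf{C}}_m=\frac1m\sum_{j=1}^m\mathbf{C}(S_j)^\top\mathbf{C}(S_j)$. Then: (1) if $\rho_\beta=0$, $\mathcal{V}(\hat\beta(S_1),\dots,\hat\beta(S_m))=1-\dfrac{\gamma^\top\mathbf{C}_m^\top\mathbf{C}_m\gamma}{\gamma^\top\widetilde{\mathbf{C}}_m\gamma}$; (2) if $\rho_\gamma^2/\rho_\beta^2\to0$ (all other quantities fixed), then $\mathbb{E}\,\mathcal{V}(\hat\beta(S_1),\dots,\hat\beta(S_m))=o(1)$.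
   Context: Structural equation model: fix integers $d,q,r\ge1$. Let $N_z\in\mathbb{R}^r$, $N_w\in\mathbb{R}^q$, $N_x\in\mathbb{R}^d$, $N_y\in\mathbb{R}$ be mutually independent zero-mean random vectors, independent of $\gamma$, with $\operatorname{Cov}(N_z)=I_r$, $\operatorname{Cov}(N_w)=\operatorname{diag}(\sigma_{w,1}^2,\dots,\sigma_{w,q}^2)$ with all $\sigma_{w,i}^2>0$, $\operatorname{Cov}(N_x)=\mathbf{D}_x$ a positive definite diagonal matrix, and $\operatorname{Var}(N_y)=\sigma_y^2>0$. With $\mathbf{A}\in\mathbb{R}^{q\times r}$, $\mathbf{B}\in\mathbb{R}^{d\times r}$, $\beta\in\mathbb{R}^d$, $\gamma\in\mathbb{R}^q$, set $Z=N_z$, $W=\mathbf{A}Z+N_w$, $X=\mathbf{B}Z+N_x$, $Y=\beta^\top X+\gamma^\top W+N_y$. For $S\subseteq\{1,\dots,q\}$, $S^c=\{1,\dots,q\}\setminus S$; $v_S$ is the subvector of $v$ with indices in $S$; $\mathbf{A}_S$ is the submatrix of rows of $\mathbf{A}$ indexed by $S$; $\mathbf{D}_S=\operatorname{diag}(\sigma_{w,i}^2)_{i\in S}$. Population regression coefficient: for fixed $\gamma$, $\hat\beta(S)=(I_d,\mathbf{0})\operatorname{Var}((X,W_S))^{-1}\operatorname{Cov}((X,W_S),Y)\in\mathbb{R}^d$. Confounding matrix: $\mathbf{C}(S)\in\mathbb{R}^{d\times q}$ has zero columns for indices in $S$, and its submatrix of columns indexed by $S^c$ equals $\mathbf{D}_x^{-1}\mathbf{B}(I_r+\mathbf{B}^\top\mathbf{D}_x^{-1}\mathbf{B}+\mathbf{A}_S^\top\mathbf{D}_S^{-1}\mathbf{A}_S)^{-1}\mathbf{A}_{S^c}^\top$.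 Stability statistic: $\mathcal{V}(v_1,\dots,v_m)=1-\frac{\|m^{-1}\sum_{j}v_j\|^2}{m^{-1}\sum_j\|v_j\|^2}$. Spherical symmetry: a random vector $\nu\in\mathbb{R}^q$ is spherically symmetric if $e^\top\nu$ has the same distribution as $\nu_1$ for every unit vector $e$. *)

(* Defs.v *)
From HB Require Import structures.
From mathcomp Require Import all_boot all_order all_algebra.
From mathcomp Require Import all_classical all_reals all_analysis.
Set Implicit Arguments. Unset Strict Implicit. Unset Printing Implicit Defensive.
Import Order.TTheory GRing.Theory Num.Theory.
Local Open Scope ring_scope.

Section SEM.
Variable R : realType.

Definition sqnorm {n} (v : 'cV[R]_n) : R := \sum_i v i 0 ^+ 2.

(* selection matrix: (selmx S) *m W = W_S  (rows of S in increasing order) *)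
Definition selmx {q} (S : {set 'I_q}) : 'M[R]_(#|S|, q) :=
  \matrix_(i, j) (enum_val i == j)%:R.

(* Population second moments of the SEM
   Z = N_z, W = A Z + N_w, X = B Z + N_x, Y = beta^T X + gamma^T W + N_y,
   with Cov(N_z) = I_r, Cov(N_w) = diag(sw), Cov(N_x) = diag(dx),
   mutually independent zero-mean noises. *)
Definition VarX {d r} (B : 'M[R]_(d, r)) (dx : 'rV[R]_d) : 'M[R]_d :=
  B *m B^T + diag_mx dx.
Definition VarW {q r} (A : 'M[R]_(q, r)) (sw : 'rV[R]_q) : 'M[R]_q :=
  A *m A^T + diag_mx sw.
Definition CovXW {d q r} (A : 'M[R]_(q, r)) (B : 'M[R]_(d, r)) : 'M[R]_(d, q) :=
  B *m A^T.

Definition VarXWS {d q r} (A : 'M[R]_(q, r)) (B : 'M[R]_(d, r))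
  (dx : 'rV[R]_d) (sw : 'rV[R]_q) (S : {set 'I_q}) : 'M[R]_(d + #|S|) :=
  block_mx (VarX B dx) (CovXW A B *m (selmx S)^T)
           (selmx S *m (CovXW A B)^T) (selmx S *m VarW A sw *m (selmx S)^T).

Definition CovXWSY {d q r} (A : 'M[R]_(q, r)) (B : 'M[R]_(d, r))
  (dx : 'rV[R]_d) (sw : 'rV[R]_q) (beta : 'cV[R]_d) (gam : 'cV[R]_q)
  (S : {set 'I_q}) : 'cV[R]_(d + #|S|) :=
  col_mx (VarX B dx *m beta + CovXW A B *m gam)
         (selmx S *m ((CovXW A B)^T *m beta + VarW A sw *m gam)).

Definition betahat {d q r} (A : 'M[R]_(q, r)) (B : 'M[R]_(d, r))
  (dx : 'rV[R]_d) (sw : 'rV[R]_q) (beta : 'cV[R]_d) (gam : 'cV[R]_q)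
  (S : {set 'I_q}) : 'cV[R]_d :=
  usubmx (invmx (VarXWS A B dx sw S) *m CovXWSY A B dx sw beta gam S).

Definition confmx {d q r} (A : 'M[R]_(q, r)) (B : 'M[R]_(d, r))
  (dx : 'rV[R]_d) (sw : 'rV[R]_q) (S : {set 'I_q}) : 'M[R]_(d, q) :=
  let Dxi := invmx (diag_mx dx) in
  let AS := selmx S *m A in
  let DS := selmx S *m diag_mx sw *m (selmx S)^T in
  let M := 1%:M + B^T *m Dxi *m B + AS^T *m invmx DS *m AS in
  let Cf := Dxi *m B *m invmx M *m A^T in
  \matrix_(i, j) (if j \in S then 0 else Cf i j).

(* stability statistic V(v_1, ..., v_m); division by 0 is 0 (MathComp) *)
Definition Vstat {d m} (v : 'I_m -> 'cV[R]_d) : R :=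
  1 - sqnorm (m%:R^-1 *: \sum_j v j) / (m%:R^-1 * \sum_j sqnorm (v j)).

End SEM.

Definition spherically_symmetric {R : realType} {d0 : measure_display}
  {T : measurableType d0} (P : probability T R) {q : nat} (hq : (0 < q)%N)
  (g : T -> 'cV[R]_q) : Prop :=
  forall e : 'cV[R]_q, sqnorm e = 1 ->
  forall Bs : set R, measurable Bs ->
    P [set w | ((e^T *m g w) 0 0) \in Bs]%classic
    = P [set w | g w (Ordinal hq) 0 \in Bs]%classic.

(* Main.v *)
Require Import Defs.
From HB Require Import structures.
From mathcomp Require Import all_boot all_order all_algebra.
From mathcomp Require Import all_classical all_reals all_analysis.
From mathcomp Require Import ring lra.
Import Order.TTheory GRing.Theory Num.Theory.
Import numFieldNormedType.Exports.
Local Open Scope classical_set_scope.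
Local Open Scope ring_scope.


Section LA.
Variable R : realType.

Lemma selmx_selT q (S : {set 'I_q}) : selmx R S *m (selmx R S)^T = 1%:M.
Proof.
apply/matrixP => a b; rewrite !mxE.
rewrite (bigD1 (enum_val a)) //= !mxE eqxx mul1r big1 ?addr0.
  by rewrite (inj_eq enum_val_inj) eq_sym.
move=> j /negbTE nj; rewrite !mxE eq_sym nj ?mul0r //.
Qed.

Lemma selmxT_sel q (S : {set 'I_q}) k j :
  ((selmx R S)^T *m selmx R S) k j = ((k == j) && (j \in S))%:R.
Proof.
rewrite !mxE; case: (boolP (j \in S)) => jS.
  rewrite andbT (bigD1 (enum_rank_in jS j)) //= !mxE enum_rankK_in // eqxx mulr1.
  rewrite big1 ?addr0; first by rewrite eq_sym.
  move=> a na; rewrite !mxE.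
  have -> : (enum_val a == j) = false.
    apply/negbTE; apply: contra na => /eqP ea; apply/eqP; apply: enum_val_inj.
    by rewrite enum_rankK_in // ea.
  by rewrite mulr0.
rewrite andbF big1 // => a _; rewrite !mxE.
have -> : (enum_val a == j) = false.
  by apply/negbTE; apply: contra jS => /eqP <-; exact: enum_valP.
by rewrite mulr0.
Qed.

Lemma selmx_diag q (S : {set 'I_q}) (sw : 'rV[R]_q) :
  selmx R S *m diag_mx sw *m (selmx R S)^T = diag_mx (\row_a sw 0 (enum_val a)).
Proof.
apply/matrixP => a b; rewrite mul_mx_diag !mxE.
rewrite (bigD1 (enum_val a)) //= !mxE eqxx mul1r big1 ?addr0.
  rewrite (inj_eq enum_val_inj) eq_sym.
  by case: (a == b); rewrite ?mulr1 ?mulr0.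
move=> j /negbTE nj; rewrite !mxE eq_sym nj ?mul0r //.
Qed.

Lemma selmx_diag2 q (S : {set 'I_q}) (sw : 'rV[R]_q) :
  selmx R S *m diag_mx sw *m ((selmx R S)^T *m selmx R S) = selmx R S *m diag_mx sw.
Proof.
rewrite mulmxA selmx_diag mul_mx_diag mul_diag_mx; apply/matrixP => a j; rewrite !mxE.
by have [->|] := eqVneq (enum_val a) j; rewrite ?mulr1 ?mul1r ?mulr0 ?mul0r.
Qed.

Lemma mask_mx q (S : {set 'I_q}) :
  1%:M - (selmx R S)^T *m selmx R S = diag_mx (\row_j (j \notin S)%:R).
Proof.
apply/matrixP => k j; have := @selmxT_sel q S k j; rewrite !mxE => ->.
have [->|nkj] := eqVneq k j; rewrite ?eqxx /=.
  by case: (j \in S) => /=; rewrite ?subrr ?subr0.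
by rewrite subr0 mulr0n.
Qed.

Lemma unitmx_ker n (M : 'M[R]_n) :
  (forall x : 'cV[R]_n, M *m x = 0 -> x = 0) -> M \in unitmx.
Proof.
move=> H; rewrite -unitmx_tr -row_free_unit -kermx_eq0; apply/eqP.
apply/row_matrixP => i; rewrite row0.
have := mulmx_ker M^T => /(congr1 (row i)); rewrite row_mul row0 => h.
have h2 : M *m (row i (kermx M^T))^T = 0.
  by rewrite -[M]trmxK -trmx_mul trmxK h trmx0.
by have := H _ h2 => /(congr1 trmx); rewrite trmxK trmx0.
Qed.

End LA.



Section LA2.
Variable R : realType.

Lemma invmx_diag n (e : 'rV[R]_n) : (forall i, e 0 i != 0) ->
  invmx (diag_mx e) = diag_mx (\row_i (e 0 i)^-1).
Proof.
move=> e0; set E := diag_mx (\row_i (e 0 i)^-1).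
have hE : diag_mx e *m E = 1%:M.
  apply/matrixP => i j; rewrite mul_diag_mx !mxE.
  by have [->|nij] := eqVneq i j; rewrite ?mulr1n ?mulr0n ?mulr0 // mulfV.
have [u _] := mulmx1_unit hE.
by rewrite -[RHS]mul1mx -(mulVmx u) -mulmxA hE mulmx1.
Qed.

Lemma qf_diag n (e : 'rV[R]_n) (x : 'cV[R]_n) :
  (x^T *m diag_mx e *m x) 0 0 = \sum_i e 0 i * x i 0 ^+ 2.
Proof.
rewrite mul_mx_diag mxE; apply: eq_bigr => i _; rewrite !mxE.
by ring.
Qed.

Lemma qf_id n (x : 'cV[R]_n) : (x^T *m x) 0 0 = sqnorm x.
Proof. by rewrite mxE; apply: eq_bigr => i _; rewrite !mxE expr2. Qed.

Lemma sqnorm_ge0 n (x : 'cV[R]_n) : 0 <= sqnorm x.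
Proof. by apply: sumr_ge0 => i _; exact: sqr_ge0. Qed.

Lemma sqnorm_eq0 n (x : 'cV[R]_n) : sqnorm x = 0 -> x = 0.
Proof.
move=> /eqP; rewrite psumr_eq0 => [/allP h|i _]; last exact: sqr_ge0.
apply/matrixP => i j; rewrite (ord1 j) mxE.
by have := h i (mem_index_enum i); rewrite /= sqrf_eq0 => /eqP.
Qed.

Lemma qf_diag_ge0 n (e : 'rV[R]_n) (x : 'cV[R]_n) : (forall i, 0 < e 0 i) ->
  0 <= (x^T *m diag_mx e *m x) 0 0.
Proof.
move=> he; rewrite qf_diag; apply: sumr_ge0 => i _.
by rewrite mulr_ge0 ?sqr_ge0 // ltW.
Qed.

Lemma qf_diag_eq0 n (e : 'rV[R]_n) (x : 'cV[R]_n) : (forall i, 0 < e 0 i) ->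
  (x^T *m diag_mx e *m x) 0 0 = 0 -> x = 0.
Proof.
move=> he; rewrite qf_diag => /eqP; rewrite psumr_eq0 => [/allP h|i _]; last first.
  by rewrite mulr_ge0 ?sqr_ge0 // ltW.
apply/matrixP => i j; rewrite (ord1 j) mxE.
have := h i (mem_index_enum i); rewrite /= mulf_eq0 sqrf_eq0 (gt_eqF (he i)) /=.
by move/eqP.
Qed.

End LA2.



Section LA3.
Variable R : realType.

Lemma mxDE m n (X Y : 'M[R]_(m, n)) i j : (X + Y) i j = X i j + Y i j.
Proof. by rewrite mxE. Qed.
Lemma mxNE m n (X : 'M[R]_(m, n)) i j : (- X) i j = - X i j.
Proof. by rewrite mxE. Qed.

Lemma mx0E m n i j : (0 : 'M[R]_(m, n)) i j = 0.
Proof. by rewrite mxE. Qed.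

Lemma trmxD' m n (X Y : 'M[R]_(m, n)) : (X + Y)^T = X^T + Y^T.
Proof. by apply/matrixP => i j; rewrite !mxE. Qed.

Ltac norm := rewrite ?(mulmxDl, mulmxDr, mulmxBl, mulmxBr, mulmxA, mul1mx, mulmx1,
  mulmx0, mul0mx, mulmxN, mulNmx, trmxD', trmx_mul, trmxK).

Lemma diag_unit n (e : 'rV[R]_n) : (forall i, 0 < e 0 i) ->
  diag_mx e *m invmx (diag_mx e) = 1%:M.
Proof.
move=> he; rewrite invmx_diag => [|i]; last by rewrite gt_eqF.
apply/matrixP => i j; rewrite mul_diag_mx !mxE.
by have [->|nij] := eqVneq i j; rewrite ?mulr1n ?mulr0n ?mulr0 // mulfV // gt_eqF.
Qed.

Variables (d q r : nat) (A : 'M[R]_(q, r)) (B : 'M[R]_(d, r)) (dx : 'rV[R]_d) (sw : 'rV[R]_q).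
Hypotheses (hdx : forall i, 0 < dx 0 i) (hsw : forall i, 0 < sw 0 i).
Variable S : {set 'I_q}.

Let P := selmx R S.
Let es := \row_a sw 0 (enum_val a) : 'rV[R]_#|S|.
Let hes : forall a, 0 < es 0 a.
Proof. by move=> a; rewrite mxE. Qed.

Lemma DS_diag : P *m diag_mx sw *m P^T = diag_mx es.
Proof. exact: selmx_diag. Qed.

Lemma Sigma_unit : VarXWS A B dx sw S \in unitmx.
Proof.
apply: unitmx_ker => x; rewrite -[x](vsubmxK x).
set x1 := usubmx x; set x2 := dsubmx x.
rewrite /VarXWS mul_block_col => /eqP; rewrite col_mx_eq0 => /andP[/eqP e1 /eqP e2].
rewrite /VarX /VarW /CovXW -/P in e1 e2.
have hs : (x1^T *m (B *m B^T + diag_mx dx) *m x1 + x1^T *m (B *m A^T *m P^T) *m x2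
   + (x2^T *m (P *m (B *m A^T)^T) *m x1 + x2^T *m (P *m (A *m A^T + diag_mx sw) *m P^T) *m x2)) = 0.
  transitivity (x1^T *m ((B *m B^T + diag_mx dx) *m x1 + B *m A^T *m P^T *m x2)
    + x2^T *m (P *m (B *m A^T)^T *m x1 + P *m (A *m A^T + diag_mx sw) *m P^T *m x2)).
    by norm.
  by rewrite e1 e2 !mulmx0 addr0.
set z := B^T *m x1 + A^T *m P^T *m x2.
have hz : z^T *m z = x1^T *m B *m B^T *m x1 + x2^T *m P *m A *m B^T *m x1 +
  (x1^T *m B *m A^T *m P^T *m x2 + x2^T *m P *m A *m A^T *m P^T *m x2).
  by rewrite /z; norm.
move: hs; norm => /(congr1 (fun M : 'M[R]_1 => M 0 0)).
rewrite !mxDE mx0E => hs.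
have hz00 := congr1 (fun M : 'M[R]_1 => M 0 0) hz; rewrite /= !mxDE in hz00.
have h1 := @qf_diag_ge0 R _ _ x1 hdx.
have h2 := @qf_diag_ge0 R _ _ x2 hes.
have h3 := @sqnorm_ge0 R _ z.
rewrite -qf_id in h3.
have e3 : (x2^T *m P *m diag_mx sw *m P^T *m x2) 0 0 = (x2^T *m diag_mx es *m x2) 0 0.
  by rewrite -DS_diag !mulmxA.
have q1 : (x1^T *m diag_mx dx *m x1) 0 0 = 0 by lra.
have q2 : (x2^T *m diag_mx es *m x2) 0 0 = 0 by lra.
by rewrite (@qf_diag_eq0 R _ _ x1 hdx q1) (@qf_diag_eq0 R _ _ x2 hes q2) col_mx0.
Qed.


Let Dxi := invmx (diag_mx dx).
Let DSi := invmx (P *m diag_mx sw *m P^T).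
Let M := 1%:M + B^T *m Dxi *m B + (P *m A)^T *m DSi *m (P *m A).

Lemma Dxi_diag : Dxi = diag_mx (\row_i (dx 0 i)^-1).
Proof. by rewrite /Dxi invmx_diag // => i; rewrite gt_eqF. Qed.

Lemma DSi_diag : DSi = diag_mx (\row_i (es 0 i)^-1).
Proof. by rewrite /DSi DS_diag invmx_diag // => i; rewrite gt_eqF. Qed.

Lemma M_unit : M \in unitmx.
Proof.
apply: unitmx_ker => x Mx.
have : x^T *m M *m x = 0 by rewrite -mulmxA Mx mulmx0.
rewrite /M; norm => /(congr1 (fun M : 'M[R]_1 => M 0 0)); rewrite !mxDE mx0E => h.
have h1 : 0 <= (x^T *m x) 0 0 by rewrite qf_id sqnorm_ge0.
have h2 := @qf_diag_ge0 R _ (\row_i (dx 0 i)^-1) (B *m x).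
have h3 := @qf_diag_ge0 R _ (\row_i (es 0 i)^-1) (P *m A *m x).
rewrite -Dxi_diag -DSi_diag in h2 h3; move: h2 h3; norm.
move=> h2 h3; have {h2 h3} [h2 h3] : (0 <= (x^T *m B^T *m Dxi *m B *m x) 0 0) /\
   (0 <= (x^T *m A^T *m P^T *m DSi *m P *m A *m x) 0 0).
  split; [apply: h2| apply: h3] => i; rewrite mxE invr_gt0 //.
have : sqnorm x = 0 by rewrite -qf_id; lra.
exact: sqnorm_eq0.
Qed.


Lemma confmx_eq : confmx A B dx sw S = Dxi *m B *m invmx M *m A^T *m (1%:M - P^T *m P).
Proof.
rewrite mask_mx mul_mx_diag; apply/matrixP => i j; rewrite !mxE /=.
by case: (j \in S) => /=; rewrite ?mulr0 ?mulr1.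
Qed.

Lemma betahat_eq beta gam :
  betahat A B dx sw beta gam S = beta + confmx A B dx sw S *m gam.
Proof.
set g' := gam - P^T *m (P *m gam).
set h := invmx M *m (A^T *m g').
have key : M *m h = A^T *m g' by rewrite /h mulKVmx // M_unit.
have Cg : confmx A B dx sw S *m gam = Dxi *m B *m h.
  by rewrite confmx_eq -[LHS]mulmxA mulmxBl mul1mx /h /g' !mulmxA.
clearbody h.
have DxDxi : diag_mx dx *m Dxi = 1%:M by exact: diag_unit.
have DSDSi : P *m diag_mx sw *m P^T *m DSi = 1%:M by rewrite /DSi DS_diag diag_unit.
have Pd2 : P *m diag_mx sw *m P^T *m P = P *m diag_mx sw.
  by rewrite -mulmxA selmx_diag2.
set u := P *m gam + DSi *m (P *m A) *m h.
have Hsol : VarXWS A B dx sw S *m col_mx (Dxi *m B *m h) u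
    = col_mx (B *m A^T *m gam) (P *m (A *m A^T + diag_mx sw) *m gam).
  rewrite /VarXWS mul_block_col -/P; congr col_mx.
    have key1 := congr1 (mulmx B) key; rewrite /M /g' in key1; move: key1; norm.
    rewrite /VarX /CovXW /u; norm; rewrite DxDxi mul1mx => key1.
    apply/matrixP => i j; move/matrixP: key1 => /(_ i j).
    rewrite !mxDE ?mxNE; lra.
  have key1 := congr1 (mulmx (P *m A)) key; rewrite /M /g' in key1; move: key1; norm.
  rewrite /VarW /CovXW /u; norm; rewrite DSDSi Pd2 mul1mx => key1.
  apply/matrixP => i j; move/matrixP: key1 => /(_ i j).
  rewrite !mxDE ?mxNE; lra.
have Cov : CovXWSY A B dx sw beta gam S = VarXWS A B dx sw S *m col_mx beta 0
    + col_mx (B *m A^T *m gam) (P *m (A *m A^T + diag_mx sw) *m gam).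
  rewrite /CovXWSY /VarXWS mul_block_col add_col_mx !mulmx0 !addr0 /VarX /CovXW /VarW -/P.
  by congr col_mx; rewrite mulmxDr !mulmxA.
rewrite /betahat Cov -Hsol -mulmxDr mulKmx ?Sigma_unit // add_col_mx col_mxKu Cg.
by [].
Qed.

End LA3.



Set Implicit Arguments.
Section SC.
Variable R : realType.

Lemma mean_id m (hm : (0 < m)%N) (x : 'I_m -> R) c :
  m%:R^-1 * \sum_j x j ^+ 2 - (m%:R^-1 * \sum_j x j) ^+ 2
  = m%:R^-1 * \sum_j (x j - c) ^+ 2 - (m%:R^-1 * \sum_j x j - c) ^+ 2.
Proof.
have hm' : m%:R != 0 :> R by rewrite pnatr_eq0 -lt0n.
have hs : \sum_j (x j - c) ^+ 2 = \sum_j x j ^+ 2 - 2 * c * \sum_j x j + m%:R * c ^+ 2.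
  rewrite (eq_bigr (fun j => x j ^+ 2 - 2 * c * x j + c ^+ 2)); last first. move=> j _. ring.
  by rewrite big_split /= sumrB -mulr_sumr sumr_const card_ord [m%:R * _]mulr_natl.
by rewrite hs; field.
Qed.

Lemma CS n (a g : 'I_n -> R) :
  (\sum_k a k * g k) ^+ 2 <= (\sum_k a k ^+ 2) * (\sum_k g k ^+ 2).
Proof.
have -> : (\sum_k a k ^+ 2) * (\sum_k g k ^+ 2)
   = \sum_k \sum_l (((a k * g l) ^+ 2 + (a l * g k) ^+ 2) / 2).
  have e1 : \sum_k \sum_l (a k * g l) ^+ 2 = (\sum_k a k ^+ 2) * (\sum_k g k ^+ 2).
    rewrite mulr_suml; apply: eq_bigr => k _; rewrite mulr_sumr.
    by apply: eq_bigr => l _; rewrite exprMn.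
  have e2 : \sum_k \sum_l (a l * g k) ^+ 2 = (\sum_k a k ^+ 2) * (\sum_k g k ^+ 2).
    by rewrite exchange_big e1.
  have -> : \sum_k \sum_l (((a k * g l) ^+ 2 + (a l * g k) ^+ 2) / 2)
     = (\sum_k \sum_l (a k * g l) ^+ 2) / 2 + (\sum_k \sum_l (a l * g k) ^+ 2) / 2.
    rewrite !mulr_suml -big_split /=; apply: eq_bigr => k _.
    by rewrite !mulr_suml -big_split; apply: eq_bigr => l _; rewrite mulrDl.
  by rewrite e1 e2; field.
rewrite expr2 mulr_suml; apply: ler_sum => k _; rewrite mulr_sumr.
apply: ler_sum => l _.
have := sqr_ge0 (a k * g l - a l * g k); nra.
Qed.


Lemma sqnorm_mul_le r c (M : 'M[R]_(r, c)) (x : 'cV[R]_c) :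
  sqnorm (M *m x) <= (\sum_i \sum_k M i k ^+ 2) * sqnorm x.
Proof.
rewrite /sqnorm mulr_suml; apply: ler_sum => i _; rewrite mxE.
exact: (CS (fun k => M i k) (fun k => x k 0)).
Qed.

Lemma V_bound d m (hm : (0 < m)%N) (beta : 'cV[R]_d) (w : 'I_m -> 'cV[R]_d) :
  0 < sqnorm beta ->
  0 <= Vstat (fun j => beta + w j) /\ Vstat (fun j => beta + w j) <= 1 /\
  Vstat (fun j => beta + w j) <= 4 * (m%:R^-1 * \sum_j sqnorm (w j)) / sqnorm beta.
Proof.
move=> hb.
have hm' : m%:R != 0 :> R by rewrite pnatr_eq0 -lt0n.
have hmi : 0 <= m%:R^-1 :> R by rewrite invr_ge0 ler0n.
set a := m%:R^-1 * \sum_j sqnorm (beta + w j).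
set b := sqnorm (m%:R^-1 *: \sum_j (beta + w j)).
set E2 := m%:R^-1 * \sum_j sqnorm (w j).
have -> : Vstat (fun j => beta + w j) = 1 - b / a by [].
pose x := fun i j => beta i 0 + w j i 0.
have ea : a = \sum_i (m%:R^-1 * \sum_j x i j ^+ 2).
  rewrite /a /sqnorm -mulr_sumr exchange_big /=; congr (_ * _).
  by apply: eq_bigr => j _; apply: eq_bigr => i _; rewrite mxE.
have eb : b = \sum_i (m%:R^-1 * \sum_j x i j) ^+ 2.
  rewrite /b /sqnorm; apply: eq_bigr => i _; rewrite mxE summxE.
  by congr ((_ * _) ^+ 2); apply: eq_bigr => j _; rewrite mxE.
have eE : E2 = \sum_i (m%:R^-1 * \sum_j (w j i 0) ^+ 2).
  rewrite /E2 /sqnorm -mulr_sumr exchange_big /=; congr (_ * _).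
have F1 : b <= a.
  rewrite ea eb; apply: ler_sum => i _.
  have := mean_id hm (x i) (m%:R^-1 * \sum_j x i j); rewrite subrr expr0n subr0 /=.
  have : 0 <= m%:R^-1 * \sum_j (x i j - m%:R^-1 * \sum_j x i j) ^+ 2.
    by rewrite mulr_ge0 // sumr_ge0 // => j _; rewrite sqr_ge0.
  lra.
have F2 : a - b <= E2.
  rewrite ea eb eE -sumrB; apply: ler_sum => i _.
  rewrite (mean_id hm (x i) (beta i 0)).
  have hx : forall j, x i j - beta i 0 = w j i 0 by move=> j; rewrite /x; ring.
  under eq_bigr => j _ do rewrite hx.
  have := sqr_ge0 (m%:R^-1 * \sum_j x i j - beta i 0); lra.
have F3 : sqnorm beta / 2 - E2 <= a.
  rewrite ea eE /sqnorm mulr_suml -sumrB; apply: ler_sum => i _.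
  have e : m%:R^-1 * \sum_j (beta i 0 ^+ 2 / 2 - w j i 0 ^+ 2)
      = beta i 0 ^+ 2 / 2 - m%:R^-1 * \sum_j w j i 0 ^+ 2.
    by rewrite sumrB sumr_const card_ord mulrBr -(mulr_natr (beta i 0 ^+ 2 / 2)) mulrCA mulVf // mulr1.
  rewrite -e; apply: ler_wpM2l => //; apply: ler_sum => j _; rewrite /x.
  have := sqr_ge0 (beta i 0 + 2 * w j i 0); nra.
have a0 : 0 <= a by rewrite mulr_ge0 // sumr_ge0 // => j _; exact: sqnorm_ge0.
have b0 : 0 <= b by exact: sqnorm_ge0.
have E0 : 0 <= E2 by rewrite mulr_ge0 // sumr_ge0 // => j _; exact: sqnorm_ge0.
have V1 : 1 - b / a <= 1 by rewrite lerBlDr lerDl divr_ge0.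
have V0 : 0 <= 1 - b / a.
  have [->|an0] := eqVneq a 0; first by rewrite invr0 mulr0 subr0.
  have ap : 0 < a by rewrite lt_def an0 a0.
  by rewrite subr_ge0 ler_pdivrMr // mul1r.
split => //; split => //.
rewrite ler_pdivlMr //.
have [h4|h4] := lerP (sqnorm beta) (4 * E2).
  nra.
have ap : 0 < a by lra.
have hV : (1 - b / a) * a = a - b by field; rewrite gt_eqF.
nra.
Qed.

End SC.
Unset Implicit Arguments.



Lemma le_int_nonneg (R : realType) d0 (T : measurableType d0) (mu : {measure set T -> \bar R})
  (f1 f2 : T -> \bar R) :
  (forall x, 0 <= f1 x)%E -> (forall x, f1 x <= f2 x)%E ->
  (\int[mu]_x f1 x <= \int[mu]_x f2 x)%E.
Proof.
move=> f10 f12.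
have f20 : forall x, (0 <= f2 x)%E by move=> x; exact: le_trans (f10 x) (f12 x).
rewrite (ge0_integralTE mu f10) (ge0_integralTE mu f20).
apply: ereal_sup_le => _ [h hf <-]; exists h => //= x; exact: le_trans (hf x) (f12 x).
Qed.

Theorem mainTheorem2 (R : realType) (d q r m : nat)
  (hd : (0 < d)%N) (hq : (0 < q)%N) (hr : (0 < r)%N) (hm : (0 < m)%N)
  (A : 'M[R]_(q, r)) (B : 'M[R]_(d, r))
  (dx : 'rV[R]_d) (sw : 'rV[R]_q)
  (hdx : forall i, 0 < dx 0 i) (hsw : forall i, 0 < sw 0 i)
  (S : 'I_m -> {set 'I_q}) (hS : forall j, S j \proper [set: 'I_q]%SET) :
  let C := fun j => confmx A B dx sw (S j) in
  let Cm := m%:R^-1 *: \sum_j C j in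
  let Ct := m%:R^-1 *: \sum_j ((C j)^T *m C j) in
  (* (1) rho_beta = 0, i.e. beta = 0 *)
  (forall gam : 'cV[R]_q,
     Vstat (fun j => betahat A B dx sw 0 gam (S j))
     = 1 - (gam^T *m Cm^T *m Cm *m gam) 0 0 / (gam^T *m Ct *m gam) 0 0)
  /\
  (* (2) rho_gamma^2 / rho_beta^2 -> 0, all other quantities fixed *)
  (forall (d0 : measure_display) (T : measurableType d0) (P : probability T R)
          (beta : nat -> 'cV[R]_d) (gam : nat -> T -> 'cV[R]_q)
          (rho_b rho_g : nat -> R) (K : R),
     (forall n, 0 < rho_b n) -> (forall n, 0 <= rho_g n) ->
     (forall n, Num.sqrt (sqnorm (beta n)) = rho_b n) ->
     (forall n (i : 'I_q), measurable_fun setT (fun w => gam n w i 0)) ->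
     (forall n, spherically_symmetric P hq (gam n)) ->
     (forall n, (\int[P]_w ((sqnorm (gam n w)) ^+ 2)%:E
                 <= (K * rho_g n ^+ 4 / (q%:R ^+ 2))%:E)%E) ->
     (fun n => rho_g n ^+ 2 / rho_b n ^+ 2) @ \oo --> 0 ->
     (fun n => (\int[P]_w
        (Vstat (fun j => betahat A B dx sw (beta n) (gam n w) (S j)))%:E)%E)
       @ \oo --> 0%E).
Proof.
move=> C Cm Ct.
have bh : forall beta gam j, betahat A B dx sw beta gam (S j) = beta + C j *m gam.
  by move=> beta gam j; rewrite (@betahat_eq R d q r A B dx sw hdx hsw (S j) beta gam).
split.
  move=> gam.
  have hv : (fun j => betahat A B dx sw 0 gam (S j)) = (fun j => C j *m gam).
    by apply: funext => j; rewrite bh add0r.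
  rewrite hv /Vstat; congr (1 - _ / _).
    rewrite -qf_id.
    have -> : m%:R^-1 *: \sum_j (C j *m gam) = Cm *m gam by rewrite /Cm -scalemxAl mulmx_suml.
    by rewrite trmx_mul !mulmxA.
  rewrite /Ct -scalemxAr -scalemxAl mxE mulmx_sumr mulmx_suml summxE; congr (_ * _).
  by apply: eq_bigr => j _; rewrite -qf_id trmx_mul !mulmxA.
move=> d0 T P beta gam rho_b rho_g K hbp hgp hnb hmeas _ hK hconv.
set cC := m%:R^-1 * \sum_j \sum_i \sum_k C j i k ^+ 2.
have cC0 : 0 <= cC.
  rewrite mulr_ge0 ?invr_ge0 ?ler0n // sumr_ge0 // => j _.
  by rewrite sumr_ge0 // => i _; rewrite sumr_ge0 // => k _; rewrite sqr_ge0.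
have rb2 : forall n, sqnorm (beta n) = rho_b n ^+ 2.
  by move=> n; rewrite -hnb sqr_sqrtr // sqnorm_ge0.
pose V n w := Vstat (fun j => betahat A B dx sw (beta n) (gam n w) (S j)).
pose sg n w := sqnorm (gam n w).
have Vb : forall n w, 0 <= V n w /\ V n w <= 4 * (cC * sg n w) / rho_b n ^+ 2.
  move=> n w; rewrite /V.
  have -> : (fun j => betahat A B dx sw (beta n) (gam n w) (S j))
      = (fun j => beta n + C j *m gam n w) by apply: funext => j; rewrite bh.
  have hb2 : 0 < sqnorm (beta n) by rewrite rb2 exprn_gt0.
  have [h0 [h1 h2]] := V_bound _ hm (beta n) (fun j => C j *m gam n w) hb2.
  split => //; apply: le_trans h2 _; rewrite rb2.
  apply: ler_wpM2r; first by rewrite invr_ge0 sqr_ge0.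
  apply: ler_wpM2l => //.
  rewrite /cC -mulrA; apply: ler_wpM2l; first by rewrite invr_ge0 ler0n.
  rewrite mulr_suml; apply: ler_sum => j _; exact: sqnorm_mul_le.
pose rr n := rho_g n ^+ 2 / rho_b n ^+ 2.
have rr0 : forall n, 0 <= rr n by move=> n; rewrite divr_ge0 ?sqr_ge0.
pose eps n := rr n + harmonic n.
have eps0 : forall n, 0 < eps n by move=> n; rewrite ltr_wpDl ?harmonic_gt0.
pose kap n := 16 * cC ^+ 2 / (rho_b n ^+ 4 * eps n).
have kap0 : forall n, 0 <= kap n.
  by move=> n; rewrite divr_ge0 // mulr_ge0 // ?sqr_ge0 // ?exprn_ge0 // ltW.
have Vb2 : forall n w, V n w <= eps n + kap n * sg n w ^+ 2.
  move=> n w; have [h0 h1] := Vb n w.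
  set y := 4 * (cC * sg n w) / rho_b n ^+ 2 in h1.
  have hbn : rho_b n != 0 by rewrite gt_eqF.
  have hen : eps n != 0 by rewrite gt_eqF.
  have e : eps n + kap n * sg n w ^+ 2 = (eps n ^+ 2 + y ^+ 2) / eps n.
    by rewrite /y /kap; field; rewrite hen hbn.
  rewrite e ler_pdivlMr //.
  have := eps0 n; have := sqr_ge0 (y - eps n); nra.
have Ib : forall n, (\int[P]_w (V n w)%:E
    <= (eps n + kap n * (K * rho_g n ^+ 4 / q%:R ^+ 2))%:E)%E.
  move=> n.
  apply: le_trans (@le_int_nonneg R _ _ P _ (fun w => (eps n + kap n * sg n w ^+ 2)%:E) _ _) _.
  - by move=> w; rewrite lee_fin; case: (Vb n w).
  - by move=> w; rewrite lee_fin Vb2.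
  have msg : measurable_fun setT (fun w => sg n w ^+ 2).
    apply: measurable_realfun.measurable_funX; rewrite /sg /sqnorm.
    apply: measurable_sum => i; apply: measurable_realfun.measurable_funX; exact: hmeas.
  rewrite (eq_integral (fun w => (eps n)%:E + (kap n)%:E * (sg n w ^+ 2)%:E)%E); last first.
    by move=> w _; rewrite EFinD EFinM.
  rewrite ge0_integralD //.
  - rewrite integral_cst //; rewrite -[X in ((eps n)%:E * X)%E]/(P [set: T] : \bar R) probability_setT.
    rewrite mule1 ge0_integralZl_EFin //.
    + rewrite (EFinD (eps n)) (EFinM (kap n)) leeD2l // lee_wpmul2l ?lee_fin //; exact: hK.
    + by move=> w _; rewrite lee_fin sqr_ge0.
    + exact/measurable_realfun.measurable_EFinP.
  - by move=> w _; rewrite lee_fin ltW.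
  - by move=> w _; rewrite -EFinM lee_fin mulr_ge0 ?sqr_ge0.
  - apply/measurable_realfun.measurable_EFinP; apply: measurable_realfun.measurable_funM => //; exact: measurable_cst.
pose c0 := `|16 * cC ^+ 2 * K / q%:R ^+ 2|.
pose u n := rr n + harmonic n + c0 * rr n.
have Iu : forall n, (\int[P]_w (V n w)%:E <= (u n)%:E)%E.
  move=> n; apply: le_trans (Ib n) _; rewrite lee_fin /u -/(eps n) lerD2l.
  have hbn : rho_b n != 0 by rewrite gt_eqF.
  have hen : eps n != 0 by rewrite gt_eqF.
  have hqn : q%:R != 0 :> R by rewrite pnatr_eq0 -lt0n.
  have -> : kap n * (K * rho_g n ^+ 4 / q%:R ^+ 2)
      = (16 * cC ^+ 2 * K / q%:R ^+ 2) * (rr n ^+ 2 / eps n).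
    by rewrite /kap /rr; field; rewrite hen hbn hqn.
  have t0 : 0 <= rr n ^+ 2 / eps n by rewrite divr_ge0 ?sqr_ge0 // ltW.
  apply: le_trans (ler_wpM2r t0 (ler_norm _)) _.
  apply: ler_wpM2l => //.
  rewrite ler_pdivrMr //.
  have := rr0 n; have := @harmonic_ge0 R n; rewrite /eps; nra.
have ucvg : u @ \oo --> 0.
  have e : (0 : R) = 0 + 0 + c0 * 0 by rewrite mulr0 !addr0.
  rewrite e; apply: cvgD; first apply: cvgD.
  - exact: hconv.
  - exact: cvg_harmonic.
  - exact: cvgMl_tmp.
have I0 : forall n, (0 <= \int[P]_w (V n w)%:E)%E.
  by move=> n; apply: integral_ge0 => w _; rewrite lee_fin; case: (Vb n w).
have Ifin : forall n, (\int[P]_w (V n w)%:E)%E \is a fin_num.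
  by move=> n; rewrite ge0_fin_numE // (le_lt_trans (Iu n)) // ltry.
apply: cvg_EFin; first exact: nearW.
apply: (squeeze_cvgr (f := fun=> 0) (h := u)); last 2 first.
- exact: cvg_cst.
- exact: ucvg.
apply: nearW => n /=; rewrite fine_ge0 /=; last exact: I0.
by have := fine_le (Ifin n) (isT : ((u n)%:E \is a fin_num)) (Iu n).
Qed.
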